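(* (Height-preserving contraction.) For all $n\geq1$, finite multisets of formulas $\Gamma,\Delta$, every formula $\nu$ and every classical formula $\alpha$: $\vdash^n\Gamma,\nu,\nu\Rightarrow\Delta$ implies $\vdash^n\Gamma,\nu\Rightarrow\Delta$ (left contraction), and $\vdash^n\Gamma\Rightarrow\alpha,\alpha,\Delta$ implies $\vdash^n\Gamma\Rightarrow\alpha,\Delta$ (right contraction for classical formulas).
   Context: Fix a countably infinite set $\mathsf{Prop}$ of propositional variables. Classical formulas are generated by $\alpha ::= p \mid \bot \mid \neg\alpha \mid \alpha\wedge\alpha \mid \alpha\vee\alpha$ with $p\in\mathsf{Prop}$. Formulas are generated by $\phi ::= \alpha \mid \phi\wedge\phi \mid \phi\vee\phi \mid \phi\mathbin{\backslash\!\!/}\phi$ where $\alpha$ is classical ($\vee$: split disjunction, $\mathbin{\backslash\!\!/}$: inquisitive disjunction). A sequent is $\Gamma\Rightarrow\Delta$ with $\Gamma,\Delta$ finite multisets of formulas; ''$\Gamma,\Delta$'' denotes multiset union. Deep-inference notation: for a formula $\chi$ with a designated occurrence of a subformula not in the scope of any negation, $\chi\{\eta\}$ denotes the result of replacing that occurrence by $\eta$. The cut-free calculus $\mathsf{GT}^-$ ($\alpha$ ranges over classical formulas, $\Lambda$ over multisets of classical formulas): axioms $\Gamma,p\Rightarrow p,\Delta$ and $\Gamma,\bot\Rightarrow\Delta$; (L$\neg$) from $\Gamma\Rightarrow\alpha,\Delta$ infer $\Gamma,\neg\alpha\Rightarrow\Delta$; (R$\neg$) from $\Gamma,\alpha\Rightarrow\Delta$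 infer $\Gamma\Rightarrow\neg\alpha,\Delta$; (L$\wedge$) from $\Gamma,\phi,\psi\Rightarrow\Delta$ infer $\Gamma,\phi\wedge\psi\Rightarrow\Delta$; (R$\wedge$) from $\Gamma\Rightarrow\phi,\Lambda$ and $\Gamma\Rightarrow\psi,\Lambda$ infer $\Gamma\Rightarrow\phi\wedge\psi,\Lambda,\Delta$; (L$\vee$) from $\Gamma,\phi\Rightarrow\Lambda$ and $\Gamma,\psi\Rightarrow\Lambda$ infer $\Gamma,\phi\vee\psi\Rightarrow\Lambda,\Delta$; (R$\vee$) from $\Gamma\Rightarrow\phi,\psi,\Delta$ infer $\Gamma\Rightarrow\phi\vee\psi,\Delta$; (L$\mathbin{\backslash\!\!/}$) from $\Gamma,\chi\{\phi_L\}\Rightarrow\Delta$ and $\Gamma,\chi\{\phi_R\}\Rightarrow\Delta$ infer $\Gamma,\chi\{\phi_L\mathbin{\backslash\!\!/}\phi_R\}\Rightarrow\Delta$; (R$\mathbin{\backslash\!\!/}$) from $\Gamma\Rightarrow\chi\{\phi_i\},\Delta$ ($i\in\{L,R\}$) infer $\Gamma\Rightarrow\chi\{\phi_L\mathbin{\backslash\!\!/}\phi_R\},\Delta$. The height of a derivation consisting of a single axiom is $1$; otherwise it is $1$ plus the maximum height of the subderivations of the premises of its last rule. $\vdash^n\Gamma\Rightarrow\Delta$ means there is a $\mathsf{GT}^-$-derivation of $\Gamma\Rightarrow\Delta$ of height at most $n$. *)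

(* Defs.v *)
From Stdlib Require Import List Permutation Arith.
Import ListNotations.

(* Formulas of propositional inquisitive-style logic with split disjunction
   [Or] and inquisitive disjunction [Idis]. Propositional variables: nat. *)
Inductive formula : Type :=
| Var  : nat -> formula
| Bot  : formula
| Neg  : formula -> formula
| And  : formula -> formula -> formula
| Or   : formula -> formula -> formula
| Idis : formula -> formula -> formula.

Fixpoint classical (f : formula) : bool :=
  match f with
  | Var _ | Bot => true
  | Neg a => classical a
  | And a b | Or a b => classical a && classical b
  | Idis _ _ => false
  end.

Fixpoint wf (f : formula) : bool :=
  match f with
  | Var _ | Bot => true
  | Neg a => classical a
  | And a b | Or a b | Idis a b => wf a && wf b
  end.

Inductive ctx : Type :=
| Hole  : ctx
| CAndL : ctx -> formula -> ctx
| CAndR : formula -> ctx -> ctx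
| COrL  : ctx -> formula -> ctx
| COrR  : formula -> ctx -> ctx
| CIdisL : ctx -> formula -> ctx
| CIdisR : formula -> ctx -> ctx.

Fixpoint plug (c : ctx) (e : formula) : formula :=
  match c with
  | Hole => e
  | CAndL c' f => And (plug c' e) f
  | CAndR f c' => And f (plug c' e)
  | COrL c' f => Or (plug c' e) f
  | COrR f c' => Or f (plug c' e)
  | CIdisL c' f => Idis (plug c' e) f
  | CIdisR f c' => Idis f (plug c' e)
  end.

Definition all_classical (L : list formula) : Prop :=
  Forall (fun f => classical f = true) L.

(* Sequents Gamma => Delta with Gamma, Delta finite multisets, represented by
   lists taken up to permutation.  [derivh h G D] : there is a GT^- derivation
   of G => D of height exactly h. *)
Inductive derivh : nat -> list formula -> list formula -> Prop :=
| ax_var : forall p G D G' D',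
    Permutation G (Var p :: G') -> Permutation D (Var p :: D') ->
    derivh 1 G D
| ax_bot : forall G D G',
    Permutation G (Bot :: G') -> derivh 1 G D
| r_Lneg : forall n a G D Gc Dc,
    classical a = true ->
    derivh n G (a :: D) ->
    Permutation Gc (Neg a :: G) -> Permutation Dc D ->
    derivh (S n) Gc Dc
| r_Rneg : forall n a G D Gc Dc,
    classical a = true ->
    derivh n (a :: G) D ->
    Permutation Gc G -> Permutation Dc (Neg a :: D) ->
    derivh (S n) Gc Dc
| r_Land : forall n phi psi G D Gc Dc,
    derivh n (phi :: psi :: G) D ->
    Permutation Gc (And phi psi :: G) -> Permutation Dc D ->
    derivh (S n) Gc Dc
| r_Rand : forall n1 n2 phi psi G L D Gc Dc,
    all_classical L ->
    derivh n1 G (phi :: L) -> derivh n2 G (psi :: L) ->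
    Permutation Gc G -> Permutation Dc (And phi psi :: L ++ D) ->
    derivh (S (Nat.max n1 n2)) Gc Dc
| r_Lor : forall n1 n2 phi psi G L D Gc Dc,
    all_classical L ->
    derivh n1 (phi :: G) L -> derivh n2 (psi :: G) L ->
    Permutation Gc (Or phi psi :: G) -> Permutation Dc (L ++ D) ->
    derivh (S (Nat.max n1 n2)) Gc Dc
| r_Ror : forall n phi psi G D Gc Dc,
    derivh n G (phi :: psi :: D) ->
    Permutation Gc G -> Permutation Dc (Or phi psi :: D) ->
    derivh (S n) Gc Dc
| r_Lidis : forall n1 n2 (c : ctx) phiL phiR G D Gc Dc,
    derivh n1 (plug c phiL :: G) D -> derivh n2 (plug c phiR :: G) D ->
    Permutation Gc (plug c (Idis phiL phiR) :: G) -> Permutation Dc D ->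
    derivh (S (Nat.max n1 n2)) Gc Dc
| r_Ridis : forall n (c : ctx) phiL phiR (i : bool) G D Gc Dc,
    derivh n G (plug c (if i then phiL else phiR) :: D) ->
    Permutation Gc G -> Permutation Dc (plug c (Idis phiL phiR) :: D) ->
    derivh (S n) Gc Dc.

Definition vdash (n : nat) (G D : list formula) : Prop :=
  exists m, m <= n /\ derivh m G D.

(* Main.v *)
Require Import Defs.
From Stdlib Require Import List Permutation Arith Lia.
Import ListNotations.

Definition fdec : forall x y : formula, {x = y} + {x <> y}.
Proof. decide equality; apply Nat.eq_dec. Qed.

Ltac perm_solve :=
  solve [
  lazymatch goal with |- ?g => tryif has_evar g then fail else idtac end;
  apply (proj2 (Permutation_count_occ fdec _ _)); let x := fresh "x" in intro x;
  repeat match goal with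
  | H : Permutation _ _ |- _ =>
      let E := fresh "E" in
      pose proof (proj1 (Permutation_count_occ fdec _ _) H x) as E; clear H
  end;
  repeat (progress (repeat rewrite count_occ_app in *; simpl count_occ in * ));
  repeat match goal with
  | |- context [fdec ?a ?b] => destruct (fdec a b)
  | H : context [fdec ?a ?b] |- _ => destruct (fdec a b)
  end; (lia || congruence) ].

Inductive dv : nat -> list formula -> list formula -> Prop :=
| d_var : forall n p G D G' D',
    Permutation G (Var p :: G') -> Permutation D (Var p :: D') -> dv (S n) G D
| d_bot : forall n G D G', Permutation G (Bot :: G') -> dv (S n) G D
| d_Lneg : forall n a G D Gc Dc, classical a = true -> dv n G (a :: D) ->
    Permutation Gc (Neg a :: G) -> Permutation Dc D -> dv (S n) Gc Dc
| d_Rneg : forall n a G D Gc Dc, classical a = true -> dv n (a :: G) D ->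
    Permutation Gc G -> Permutation Dc (Neg a :: D) -> dv (S n) Gc Dc
| d_Land : forall n phi psi G D Gc Dc, dv n (phi :: psi :: G) D ->
    Permutation Gc (And phi psi :: G) -> Permutation Dc D -> dv (S n) Gc Dc
| d_Rand : forall n phi psi G L D Gc Dc, all_classical L ->
    dv n G (phi :: L) -> dv n G (psi :: L) ->
    Permutation Gc G -> Permutation Dc (And phi psi :: L ++ D) -> dv (S n) Gc Dc
| d_Lor : forall n phi psi G L D Gc Dc, all_classical L ->
    dv n (phi :: G) L -> dv n (psi :: G) L ->
    Permutation Gc (Or phi psi :: G) -> Permutation Dc (L ++ D) -> dv (S n) Gc Dc
| d_Ror : forall n phi psi G D Gc Dc, dv n G (phi :: psi :: D) ->
    Permutation Gc G -> Permutation Dc (Or phi psi :: D) -> dv (S n) Gc Dc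
| d_Lidis : forall n (c : ctx) phiL phiR G D Gc Dc,
    dv n (plug c phiL :: G) D -> dv n (plug c phiR :: G) D ->
    Permutation Gc (plug c (Idis phiL phiR) :: G) -> Permutation Dc D -> dv (S n) Gc Dc
| d_Ridis : forall n (c : ctx) phiL phiR (i : bool) G D Gc Dc,
    dv n G (plug c (if i then phiL else phiR) :: D) ->
    Permutation Gc G -> Permutation Dc (plug c (Idis phiL phiR) :: D) -> dv (S n) Gc Dc.

Ltac pt := first [ assumption | perm_solve ].

Ltac ptr := eapply Permutation_trans; [apply Permutation_sym; eassumption| eassumption].
Lemma dv_perm n G D : dv n G D -> forall G' D', Permutation G G' -> Permutation D D' -> dv n G' D'.
Proof.
  intros H G' D' HG HD; destruct H.
  - apply d_var with (p := p) (G' := G'0) (D' := D'0); perm_solve.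
  - apply d_bot with (G' := G'0); perm_solve.
  - eapply d_Lneg with (G := G) (D := D); [eassumption|eassumption|perm_solve|perm_solve].
  - eapply d_Rneg with (G := G) (D := D); [eassumption|eassumption|perm_solve|perm_solve].
  - eapply d_Land with (G := G) (D := D); [eassumption|perm_solve|perm_solve].
  - eapply d_Rand with (phi:=phi) (psi:=psi) (G := G) (L := L) (D := D); [eassumption|eassumption|eassumption|perm_solve|perm_solve].
  - eapply d_Lor with (phi:=phi) (psi:=psi) (G := G) (L := L) (D := D); [eassumption|eassumption|eassumption|perm_solve|perm_solve].
  - eapply d_Ror with (G := G) (D := D); [eassumption|perm_solve|perm_solve].
  - eapply d_Lidis with (phiL:=phiL) (phiR:=phiR) (G := G) (D := D); [eassumption|eassumption|perm_solve|perm_solve].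
  - eapply d_Ridis with (G := G) (D := D); [eassumption|perm_solve|perm_solve].
Qed.

Ltac rebuild T := eapply dv_perm; [exact T | perm_solve | perm_solve].
Ltac prm H G D := apply (dv_perm _ _ _ H G D); [perm_solve | perm_solve].

Lemma Lneg' n a G D : classical a = true -> dv n G (a :: D) -> dv (S n) (Neg a :: G) D.
Proof. intros; eapply d_Lneg; try apply Permutation_refl; eauto. Qed.
Lemma Rneg' n a G D : classical a = true -> dv n (a :: G) D -> dv (S n) G (Neg a :: D).
Proof. intros; eapply d_Rneg; try apply Permutation_refl; eauto. Qed.
Lemma Land' n phi psi G D : dv n (phi :: psi :: G) D -> dv (S n) (And phi psi :: G) D.
Proof. intros; eapply d_Land; try apply Permutation_refl; eauto. Qed.
Lemma Rand' n phi psi G L D : all_classical L -> dv n G (phi :: L) -> dv n G (psi :: L) ->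
  dv (S n) G (And phi psi :: L ++ D).
Proof. intros; eapply d_Rand; try apply Permutation_refl; eauto. Qed.
Lemma Lor' n phi psi G L D : all_classical L -> dv n (phi :: G) L -> dv n (psi :: G) L ->
  dv (S n) (Or phi psi :: G) (L ++ D).
Proof. intros; eapply d_Lor; try apply Permutation_refl; eauto. Qed.
Lemma Ror' n phi psi G D : dv n G (phi :: psi :: D) -> dv (S n) G (Or phi psi :: D).
Proof. intros; eapply d_Ror; try apply Permutation_refl; eauto. Qed.
Lemma Lidis' n c phiL phiR G D : dv n (plug c phiL :: G) D -> dv n (plug c phiR :: G) D ->
  dv (S n) (plug c (Idis phiL phiR) :: G) D.
Proof. intros; eapply d_Lidis; try apply Permutation_refl; eauto. Qed.
Lemma Ridis' n c phiL phiR (i : bool) G D : dv n G (plug c (if i then phiL else phiR) :: D) ->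
  dv (S n) G (plug c (Idis phiL phiR) :: D).
Proof. intros; eapply d_Ridis; try apply Permutation_refl; eauto. Qed.

Lemma dv_S n G D : dv n G D -> dv (S n) G D.
Proof.
  induction 1.
  - eapply d_var; eauto.
  - eapply d_bot; eauto.
  - eapply d_Lneg with (a:=a) (G:=G) (D:=D); eauto.
  - eapply d_Rneg with (a:=a) (G:=G) (D:=D); eauto.
  - eapply d_Land with (phi:=phi) (psi:=psi) (G:=G) (D:=D); eauto.
  - eapply d_Rand with (phi:=phi) (psi:=psi) (G:=G) (L:=L) (D:=D); eauto.
  - eapply d_Lor with (phi:=phi) (psi:=psi) (G:=G) (L:=L) (D:=D); eauto.
  - eapply d_Ror with (phi:=phi) (psi:=psi) (G:=G) (D:=D); eauto.
  - eapply d_Lidis with (c:=c) (phiL:=phiL) (phiR:=phiR) (G:=G) (D:=D); eauto.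
  - eapply d_Ridis with (c:=c) (phiL:=phiL) (phiR:=phiR) (i:=i) (G:=G) (D:=D); eauto.
Qed.

Lemma dv_mono n m G D : dv n G D -> n <= m -> dv m G D.
Proof. intros H Hle; induction Hle; auto using dv_S. Qed.

Lemma derivh_dv n G D : derivh n G D -> dv n G D.
Proof.
  induction 1.
  - eapply d_var; eauto.
  - eapply d_bot; eauto.
  - eapply d_Lneg with (a:=a) (G:=G) (D:=D); eauto.
  - eapply d_Rneg with (a:=a) (G:=G) (D:=D); eauto.
  - eapply d_Land with (phi:=phi) (psi:=psi) (G:=G) (D:=D); eauto.
  - eapply d_Rand with (phi:=phi) (psi:=psi) (G:=G) (L:=L) (D:=D); eauto; eapply dv_mono; eauto; lia.
  - eapply d_Lor with (phi:=phi) (psi:=psi) (G:=G) (L:=L) (D:=D); eauto; eapply dv_mono; eauto; lia.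
  - eapply d_Ror with (phi:=phi) (psi:=psi) (G:=G) (D:=D); eauto.
  - eapply d_Lidis with (c:=c) (phiL:=phiL) (phiR:=phiR) (G:=G) (D:=D); eauto; eapply dv_mono; eauto; lia.
  - eapply d_Ridis with (c:=c) (phiL:=phiL) (phiR:=phiR) (i:=i) (G:=G) (D:=D); eauto.
Qed.

Lemma dv_vdash n G D : dv n G D -> vdash n G D.
Proof.
  unfold vdash; induction 1;
  repeat match goal with H : exists _, _ |- _ => destruct H as [? [? ?]] end.
  - eexists; split; [|eapply ax_var; eauto]; lia.
  - eexists; split; [|eapply ax_bot; eauto]; lia.
  - eexists; split; [|eapply r_Lneg; eauto]; lia.
  - eexists; split; [|eapply r_Rneg; eauto]; lia.
  - eexists; split; [|eapply r_Land; eauto]; lia.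
  - eexists; split; [|eapply r_Rand with (phi:=phi) (psi:=psi) (G:=G) (L:=L) (D:=D); eauto]; lia.
  - eexists; split; [|eapply r_Lor with (phi:=phi) (psi:=psi) (G:=G) (L:=L) (D:=D); eauto]; lia.
  - eexists; split; [|eapply r_Ror; eauto]; lia.
  - eexists; split; [|eapply r_Lidis with (c:=c) (phiL:=phiL) (phiR:=phiR) (G:=G) (D:=D); eauto]; lia.
  - eexists; split; [|eapply r_Ridis with (c:=c) (phiL:=phiL) (phiR:=phiR) (i:=i) (G:=G) (D:=D); eauto]; lia.
Qed.

Lemma vdash_dv n G D : vdash n G D -> dv n G D.
Proof. intros [m [Hm H]]. eapply dv_mono; [apply derivh_dv; eauto | lia]. Qed.

Lemma wkL n G D : dv n G D -> forall x, dv n (x :: G) D.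
Proof.
  induction 1; intro x.
  - apply d_var with (p := p) (G' := x :: G') (D' := D'); perm_solve.
  - apply d_bot with (G' := x :: G'); perm_solve.
  - rebuild (Lneg' _ _ _ _ H (IHdv x)).
  - assert (X : dv n (a :: x :: G) D) by prm (IHdv x) (a :: x :: G) D.
    rebuild (Rneg' _ _ _ _ H X).
  - assert (X : dv n (phi :: psi :: x :: G) D) by prm (IHdv x) (phi :: psi :: x :: G) D.
    rebuild (Land' _ _ _ _ _ X).
  - rebuild (Rand' _ _ _ _ _ D H (IHdv1 x) (IHdv2 x)).
  - assert (X1 : dv n (phi :: x :: G) L) by prm (IHdv1 x) (phi :: x :: G) L.
    assert (X2 : dv n (psi :: x :: G) L) by prm (IHdv2 x) (psi :: x :: G) L.
    rebuild (Lor' _ _ _ _ _ D H X1 X2).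
  - rebuild (Ror' _ _ _ _ _ (IHdv x)).
  - assert (X1 : dv n (plug c phiL :: x :: G) D) by prm (IHdv1 x) (plug c phiL :: x :: G) D.
    assert (X2 : dv n (plug c phiR :: x :: G) D) by prm (IHdv2 x) (plug c phiR :: x :: G) D.
    rebuild (Lidis' _ _ _ _ _ _ X1 X2).
  - rebuild (Ridis' _ _ _ _ _ _ _ (IHdv x)).
Qed.

Lemma wkR n G D : dv n G D -> forall x, dv n G (x :: D).
Proof.
  induction 1; intro x.
  - apply d_var with (p := p) (G' := G') (D' := x :: D'); perm_solve.
  - apply d_bot with (G' := G'); perm_solve.
  - assert (X : dv n G (a :: x :: D)) by prm (IHdv x) G (a :: x :: D).
    rebuild (Lneg' _ _ _ _ H X).
  - rebuild (Rneg' _ _ _ _ H (IHdv x)).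
  - rebuild (Land' _ _ _ _ _ (IHdv x)).
  - rebuild (Rand' _ _ _ _ _ (x :: D) H H0 H1).
  - rebuild (Lor' _ _ _ _ _ (x :: D) H H0 H1).
  - assert (X : dv n G (phi :: psi :: x :: D)) by prm (IHdv x) G (phi :: psi :: x :: D).
    rebuild (Ror' _ _ _ _ _ X).
  - rebuild (Lidis' _ _ _ _ _ _ (IHdv1 x) (IHdv2 x)).
  - assert (X : dv n G (plug c (if i then phiL else phiR) :: x :: D))
      by prm (IHdv x) G (plug c (if i then phiL else phiR) :: x :: D).
    rebuild (Ridis' _ _ _ _ _ _ _ X).
Qed.

Lemma wkRl n G D : dv n G D -> forall L, dv n G (L ++ D).
Proof. intros H L; induction L; simpl; auto using wkR. Qed.

Lemma in_perm (x : formula) L : In x L -> exists L', Permutation L (x :: L').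
Proof.
  intro H; destruct (in_split _ _ H) as [l1 [l2 ->]]. exists (l1 ++ l2).
  apply Permutation_sym, Permutation_middle.
Qed.

Lemma perm_split (a b : formula) l m : Permutation (a :: l) (b :: m) ->
  (a = b /\ Permutation l m) \/ (exists k, Permutation m (a :: k) /\ Permutation l (b :: k)).
Proof.
  intro H. assert (Hi : In a (b :: m)) by (eapply Permutation_in; [exact H| left; auto]).
  destruct Hi as [E|Hi].
  - subst; left; split; auto. eapply Permutation_cons_inv; eauto.
  - right. destruct (in_perm _ _ Hi) as [k Hk]. exists k. split; auto.
    perm_solve.
Qed.

Lemma ax_in (P X : formula) Gc G' G : Permutation Gc (P :: G') -> Permutation Gc (X :: G) -> X <> P ->
  exists G'', Permutation G (P :: G'').
Proof.
  intros H1 H2 Hn. destruct (perm_split X P G G') as [[E _]|[k [_ Hk]]].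
  - eapply Permutation_trans; [apply Permutation_sym; exact H2| exact H1].
  - congruence.
  - eauto.
Qed.

Ltac psplit H1 H2 k :=
  let Hs := fresh in
  pose proof (perm_split _ _ _ _ (Permutation_trans (Permutation_sym H1) H2)) as Hs;
  destruct Hs as [[? ?]|[k [? ?]]].

Ltac dvcase H :=
  let Em := fresh "Em" in
  match type of H with dv (S ?n) _ _ => remember (S n) as m eqn:Em end;
  destruct H as [k p G D G' D' HG HD | k G D G' HG | k a G D Gc Dc Ha Hp HG HD
   | k a G D Gc Dc Ha Hp HG HD | k phi psi G D Gc Dc Hp HG HD
   | k phi psi G L D Gc Dc HL Hp1 Hp2 HG HD | k phi psi G L D Gc Dc HL Hp1 Hp2 HG HD
   | k phi psi G D Gc Dc Hp HG HD | k c phiL phiR G D Gc Dc Hp1 Hp2 HG HD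
   | k c phiL phiR i G D Gc Dc Hp HG HD]; injection Em as ->.

Lemma plug_not_neg c L R a : plug c (Idis L R) <> Neg a.
Proof. destruct c; simpl; discriminate. Qed.
Lemma plug_not_and c L R a b : plug c (Idis L R) <> And a b -> True.
Proof. auto. Qed.
Lemma plug_nonclassical c L R : classical (plug c (Idis L R)) = false.
Proof. induction c; simpl; try rewrite IHc; auto; destruct (classical f); auto. Qed.

Lemma all_classical_cons a L : classical a = true -> all_classical L -> all_classical (a :: L).
Proof. intros; constructor; auto. Qed.
Lemma all_classical_perm L L' : all_classical L -> Permutation L L' -> all_classical L'.
Proof. intros H P. unfold all_classical in *. rewrite <- P. auto. Qed.

Lemma perm_app_split (x : formula) L D k : Permutation (L ++ D) (x :: k) ->
  (exists D1, Permutation D (x :: D1) /\ Permutation k (L ++ D1)) \/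
  (exists L1, Permutation L (x :: L1) /\ Permutation k (L1 ++ D)).
Proof.
  intro H. assert (Hi : In x (L ++ D)) by (eapply Permutation_in; [apply Permutation_sym; exact H| left; auto]).
  apply in_app_or in Hi. destruct Hi as [Hi|Hi]; destruct (in_perm _ _ Hi) as [M HM].
  - right. exists M. split; auto. perm_solve.
  - left. exists M. split; auto. perm_solve.
Qed.

Lemma all_classical_tail L x L1 : all_classical L -> Permutation L (x :: L1) -> all_classical L1 /\ classical x = true.
Proof. intros H P. pose proof (all_classical_perm _ _ H P) as H'. inversion H'; auto. Qed.

Lemma inv_Lneg : forall n G0 D0, dv n G0 D0 -> forall a0 Gx Dx, classical a0 = true ->
  Permutation G0 (Neg a0 :: Gx) -> Permutation D0 Dx -> dv n Gx (a0 :: Dx).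
Proof.
  induction n as [|n IH]; intros G0 D0 H; [inversion H|]; dvcase H; intros a0 Gx Dx Ha0 PG PD.
  - destruct (ax_in _ _ _ _ _ HG PG) as [G2 HG2]; [discriminate|].
    apply d_var with p G2 (a0 :: D'); perm_solve.
  - destruct (ax_in _ _ _ _ _ HG PG) as [G2 HG2]; [discriminate|].
    apply d_bot with G2; perm_solve.
  - psplit PG HG k0.
    + match goal with E : Neg _ = Neg _ |- _ => injection E as -> end.
      apply dv_S. prm Hp Gx (a :: Dx).
    + assert (X := IH _ _ Hp a0 k0 (a :: D) Ha0 ltac:(perm_solve) ltac:(perm_solve)).
      assert (X' : dv n k0 (a :: a0 :: D)) by prm X k0 (a :: a0 :: D).
      rebuild (Lneg' _ _ _ _ Ha X').
  - assert (X := IH _ _ Hp a0 (a :: Gx) D Ha0 ltac:(perm_solve) ltac:(perm_solve)).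
    rebuild (Rneg' _ _ _ _ Ha X).
  - psplit PG HG k0; [discriminate|].
    assert (X := IH _ _ Hp a0 (phi :: psi :: k0) D Ha0 ltac:(perm_solve) ltac:(perm_solve)).
    rebuild (Land' _ _ _ _ _ X).
  - assert (X1 := IH _ _ Hp1 a0 Gx (phi :: L) Ha0 ltac:(perm_solve) ltac:(perm_solve)).
    assert (X2 := IH _ _ Hp2 a0 Gx (psi :: L) Ha0 ltac:(perm_solve) ltac:(perm_solve)).
    assert (Y1 : dv n Gx (phi :: a0 :: L)) by prm X1 Gx (phi :: a0 :: L).
    assert (Y2 : dv n Gx (psi :: a0 :: L)) by prm X2 Gx (psi :: a0 :: L).
    rebuild (Rand' _ _ _ _ _ D (all_classical_cons _ _ Ha0 HL) Y1 Y2).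
  - psplit PG HG k0; [discriminate|].
    assert (X1 := IH _ _ Hp1 a0 (phi :: k0) L Ha0 ltac:(perm_solve) ltac:(perm_solve)).
    assert (X2 := IH _ _ Hp2 a0 (psi :: k0) L Ha0 ltac:(perm_solve) ltac:(perm_solve)).
    rebuild (Lor' _ _ _ _ _ D (all_classical_cons _ _ Ha0 HL) X1 X2).
  - assert (X := IH _ _ Hp a0 Gx (phi :: psi :: D) Ha0 ltac:(perm_solve) ltac:(perm_solve)).
    assert (Y : dv n Gx (phi :: psi :: a0 :: D)) by prm X Gx (phi :: psi :: a0 :: D).
    rebuild (Ror' _ _ _ _ _ Y).
  - psplit PG HG k0; [exfalso; eapply plug_not_neg; eauto|].
    assert (X1 := IH _ _ Hp1 a0 (plug c phiL :: k0) D Ha0 ltac:(perm_solve) ltac:(perm_solve)).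
    assert (X2 := IH _ _ Hp2 a0 (plug c phiR :: k0) D Ha0 ltac:(perm_solve) ltac:(perm_solve)).
    rebuild (Lidis' _ _ _ _ _ _ X1 X2).
  - assert (X := IH _ _ Hp a0 Gx _ Ha0 ltac:(perm_solve) (Permutation_refl _)).
    assert (Y : dv n Gx (plug c (if i then phiL else phiR) :: a0 :: D)) by prm X Gx (plug c (if i then phiL else phiR) :: a0 :: D).
    rebuild (Ridis' _ _ _ _ _ _ _ Y).
Qed.

Lemma inv_Rneg : forall n G0 D0, dv n G0 D0 -> forall a0 Gx Dx,
  Permutation G0 Gx -> Permutation D0 (Neg a0 :: Dx) -> dv n (a0 :: Gx) Dx.
Proof.
  induction n as [|n IH]; intros G0 D0 H; [inversion H|]; dvcase H; intros a0 Gx Dx PG PD.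
  - destruct (ax_in _ _ _ _ _ HD PD) as [D2 HD2]; [discriminate|].
    apply d_var with p (a0 :: G') D2; perm_solve.
  - apply d_bot with (a0 :: G'); perm_solve.
  - assert (X := IH _ _ Hp a0 G (a :: Dx) ltac:(perm_solve) ltac:(perm_solve)).
    rebuild (Lneg' _ _ _ _ Ha X).
  - psplit PD HD k0.
    + match goal with E : Neg _ = Neg _ |- _ => injection E as -> end.
      apply dv_S. prm Hp (a :: Gx) Dx.
    + assert (X := IH _ _ Hp a0 (a :: G) k0 ltac:(perm_solve) ltac:(perm_solve)).
      assert (X' : dv n (a :: a0 :: G) k0) by prm X (a :: a0 :: G) k0.
      rebuild (Rneg' _ _ _ _ Ha X').
  - assert (X := IH _ _ Hp a0 (phi :: psi :: G) Dx ltac:(perm_solve) ltac:(perm_solve)).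
    assert (X' : dv n (phi :: psi :: a0 :: G) Dx) by prm X (phi :: psi :: a0 :: G) Dx.
    rebuild (Land' _ _ _ _ _ X').
  - psplit PD HD k0; [discriminate|].
    destruct (perm_app_split _ _ _ _ ltac:(eassumption)) as [[D1 [HD1 Hk]]|[L1 [HL1 Hk]]].
    + rebuild (Rand' _ _ _ _ _ D1 HL (wkL _ _ _ Hp1 a0) (wkL _ _ _ Hp2 a0)).
    + destruct (all_classical_tail _ _ _ HL HL1) as [HL1c _].
      assert (X1 := IH _ _ Hp1 a0 G (phi :: L1) ltac:(perm_solve) ltac:(perm_solve)).
      assert (X2 := IH _ _ Hp2 a0 G (psi :: L1) ltac:(perm_solve) ltac:(perm_solve)).
      rebuild (Rand' _ _ _ _ _ D HL1c X1 X2).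
  - destruct (perm_app_split _ _ _ _ (Permutation_trans (Permutation_sym HD) PD)) as [[D1 [HD1 Hk]]|[L1 [HL1 Hk]]].
    + assert (Y1 : dv n (phi :: a0 :: G) L) by prm (wkL _ _ _ Hp1 a0) (phi :: a0 :: G) L.
      assert (Y2 : dv n (psi :: a0 :: G) L) by prm (wkL _ _ _ Hp2 a0) (psi :: a0 :: G) L.
      rebuild (Lor' _ _ _ _ _ D1 HL Y1 Y2).
    + destruct (all_classical_tail _ _ _ HL HL1) as [HL1c _].
      assert (X1 := IH _ _ Hp1 a0 (phi :: G) L1 ltac:(perm_solve) ltac:(perm_solve)).
      assert (X2 := IH _ _ Hp2 a0 (psi :: G) L1 ltac:(perm_solve) ltac:(perm_solve)).
      assert (Y1 : dv n (phi :: a0 :: G) L1) by prm X1 (phi :: a0 :: G) L1.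
      assert (Y2 : dv n (psi :: a0 :: G) L1) by prm X2 (psi :: a0 :: G) L1.
      rebuild (Lor' _ _ _ _ _ D HL1c Y1 Y2).
  - psplit PD HD k0; [discriminate|].
    assert (X := IH _ _ Hp a0 G (phi :: psi :: k0) ltac:(perm_solve) ltac:(perm_solve)).
    rebuild (Ror' _ _ _ _ _ X).
  - assert (X1 := IH _ _ Hp1 a0 (plug c phiL :: G) Dx ltac:(perm_solve) ltac:(perm_solve)).
    assert (X2 := IH _ _ Hp2 a0 (plug c phiR :: G) Dx ltac:(perm_solve) ltac:(perm_solve)).
    assert (Y1 : dv n (plug c phiL :: a0 :: G) Dx) by prm X1 (plug c phiL :: a0 :: G) Dx.
    assert (Y2 : dv n (plug c phiR :: a0 :: G) Dx) by prm X2 (plug c phiR :: a0 :: G) Dx.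
    rebuild (Lidis' _ _ _ _ _ _ Y1 Y2).
  - psplit PD HD k0; [exfalso; eapply plug_not_neg; eauto|].
    assert (X := IH _ _ Hp a0 G (plug c (if i then phiL else phiR) :: k0) ltac:(perm_solve) ltac:(perm_solve)).
    rebuild (Ridis' _ _ _ _ _ _ _ X).
Qed.

Lemma inv_Land : forall n G0 D0, dv n G0 D0 -> forall f0 g0 Gx Dx,
  Permutation G0 (And f0 g0 :: Gx) -> Permutation D0 Dx -> dv n (f0 :: g0 :: Gx) Dx.
Proof.
  induction n as [|n IH]; intros G0 D0 H; [inversion H|]; dvcase H; intros f0 g0 Gx Dx PG PD.
  - destruct (ax_in _ _ _ _ _ HG PG) as [G2 HG2]; [discriminate|].
    apply d_var with p (f0 :: g0 :: G2) D'; perm_solve.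
  - destruct (ax_in _ _ _ _ _ HG PG) as [G2 HG2]; [discriminate|].
    apply d_bot with (f0 :: g0 :: G2); perm_solve.
  - psplit PG HG k0; [discriminate|].
    assert (X := IH _ _ Hp f0 g0 k0 (a :: D) ltac:(perm_solve) ltac:(perm_solve)).
    rebuild (Lneg' _ _ _ _ Ha X).
  - assert (X := IH _ _ Hp f0 g0 (a :: Gx) D ltac:(perm_solve) ltac:(perm_solve)).
    assert (X' : dv n (a :: f0 :: g0 :: Gx) D) by prm X (a :: f0 :: g0 :: Gx) D.
    rebuild (Rneg' _ _ _ _ Ha X').
  - psplit PG HG k0.
    + match goal with E : And _ _ = And _ _ |- _ => injection E as -> -> end.
      apply dv_S. prm Hp (phi :: psi :: Gx) Dx.
    + assert (X := IH _ _ Hp f0 g0 (phi :: psi :: k0) D ltac:(perm_solve) ltac:(perm_solve)).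
      assert (X' : dv n (phi :: psi :: f0 :: g0 :: k0) D) by prm X (phi :: psi :: f0 :: g0 :: k0) D.
      rebuild (Land' _ _ _ _ _ X').
  - assert (X1 := IH _ _ Hp1 f0 g0 Gx (phi :: L) ltac:(perm_solve) ltac:(perm_solve)).
    assert (X2 := IH _ _ Hp2 f0 g0 Gx (psi :: L) ltac:(perm_solve) ltac:(perm_solve)).
    rebuild (Rand' _ _ _ _ _ D HL X1 X2).
  - psplit PG HG k0; [discriminate|].
    assert (X1 := IH _ _ Hp1 f0 g0 (phi :: k0) L ltac:(perm_solve) ltac:(perm_solve)).
    assert (X2 := IH _ _ Hp2 f0 g0 (psi :: k0) L ltac:(perm_solve) ltac:(perm_solve)).
    assert (Y1 : dv n (phi :: f0 :: g0 :: k0) L) by prm X1 (phi :: f0 :: g0 :: k0) L.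
    assert (Y2 : dv n (psi :: f0 :: g0 :: k0) L) by prm X2 (psi :: f0 :: g0 :: k0) L.
    rebuild (Lor' _ _ _ _ _ D HL Y1 Y2).
  - assert (X := IH _ _ Hp f0 g0 Gx (phi :: psi :: D) ltac:(perm_solve) ltac:(perm_solve)).
    rebuild (Ror' _ _ _ _ _ X).
  - psplit PG HG k0.
    + match goal with E0 : And _ _ = plug _ _ |- _ => revert E0 end; intro E.
      destruct c; simpl in E; try discriminate; injection E as -> ->; simpl in Hp1, Hp2.
      * assert (X1 := IH _ _ Hp1 (plug c phiL) f G D ltac:(perm_solve) ltac:(perm_solve)).
        assert (X2 := IH _ _ Hp2 (plug c phiR) f G D ltac:(perm_solve) ltac:(perm_solve)).
        rebuild (Lidis' _ _ _ _ _ _ X1 X2).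
      * assert (X1 := IH _ _ Hp1 f (plug c phiL) G D ltac:(perm_solve) ltac:(perm_solve)).
        assert (X2 := IH _ _ Hp2 f (plug c phiR) G D ltac:(perm_solve) ltac:(perm_solve)).
        assert (Y1 : dv n (plug c phiL :: f :: G) D) by prm X1 (plug c phiL :: f :: G) D.
        assert (Y2 : dv n (plug c phiR :: f :: G) D) by prm X2 (plug c phiR :: f :: G) D.
        rebuild (Lidis' _ _ _ _ _ _ Y1 Y2).
    + assert (X1 := IH _ _ Hp1 f0 g0 (plug c phiL :: k0) D ltac:(perm_solve) ltac:(perm_solve)).
      assert (X2 := IH _ _ Hp2 f0 g0 (plug c phiR :: k0) D ltac:(perm_solve) ltac:(perm_solve)).
      assert (Y1 : dv n (plug c phiL :: f0 :: g0 :: k0) D) by prm X1 (plug c phiL :: f0 :: g0 :: k0) D.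
      assert (Y2 : dv n (plug c phiR :: f0 :: g0 :: k0) D) by prm X2 (plug c phiR :: f0 :: g0 :: k0) D.
      rebuild (Lidis' _ _ _ _ _ _ Y1 Y2).
  - assert (X := IH _ _ Hp f0 g0 Gx _ ltac:(perm_solve) (Permutation_refl _)).
    rebuild (Ridis' _ _ _ _ _ _ _ X).
Qed.

Lemma inv_Lor : forall n G0 D0, dv n G0 D0 -> forall f0 g0 (b : bool) Gx Dx,
  Permutation G0 (Or f0 g0 :: Gx) -> Permutation D0 Dx -> dv n ((if b then f0 else g0) :: Gx) Dx.
Proof.
  induction n as [|n IH]; intros G0 D0 H; [inversion H|]; dvcase H; intros f0 g0 b Gx Dx PG PD;
  set (h := if b then f0 else g0).
  - destruct (ax_in _ _ _ _ _ HG PG) as [G2 HG2]; [discriminate|].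
    apply d_var with p (h :: G2) D'; perm_solve.
  - destruct (ax_in _ _ _ _ _ HG PG) as [G2 HG2]; [discriminate|].
    apply d_bot with (h :: G2); perm_solve.
  - psplit PG HG k0; [discriminate|].
    assert (X := IH _ _ Hp f0 g0 b k0 (a :: D) ltac:(perm_solve) ltac:(perm_solve)).
    fold h in X. rebuild (Lneg' _ _ _ _ Ha X).
  - assert (X := IH _ _ Hp f0 g0 b (a :: Gx) D ltac:(perm_solve) ltac:(perm_solve)).
    fold h in X. assert (X' : dv n (a :: h :: Gx) D) by prm X (a :: h :: Gx) D.
    rebuild (Rneg' _ _ _ _ Ha X').
  - psplit PG HG k0; [discriminate|].
    assert (X := IH _ _ Hp f0 g0 b (phi :: psi :: k0) D ltac:(perm_solve) ltac:(perm_solve)).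
    fold h in X. assert (X' : dv n (phi :: psi :: h :: k0) D) by prm X (phi :: psi :: h :: k0) D.
    rebuild (Land' _ _ _ _ _ X').
  - assert (X1 := IH _ _ Hp1 f0 g0 b Gx (phi :: L) ltac:(perm_solve) ltac:(perm_solve)).
    assert (X2 := IH _ _ Hp2 f0 g0 b Gx (psi :: L) ltac:(perm_solve) ltac:(perm_solve)).
    fold h in X1, X2. rebuild (Rand' _ _ _ _ _ D HL X1 X2).
  - psplit PG HG k0.
    + match goal with E0 : Or _ _ = Or _ _ |- _ => injection E0 as -> -> end.
      apply dv_S. unfold h; destruct b.
      * prm (wkRl _ _ _ Hp1 D) (phi :: Gx) Dx.
      * prm (wkRl _ _ _ Hp2 D) (psi :: Gx) Dx.
    + assert (X1 := IH _ _ Hp1 f0 g0 b (phi :: k0) L ltac:(perm_solve) ltac:(perm_solve)).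
      assert (X2 := IH _ _ Hp2 f0 g0 b (psi :: k0) L ltac:(perm_solve) ltac:(perm_solve)).
      fold h in X1, X2.
      assert (Y1 : dv n (phi :: h :: k0) L) by prm X1 (phi :: h :: k0) L.
      assert (Y2 : dv n (psi :: h :: k0) L) by prm X2 (psi :: h :: k0) L.
      rebuild (Lor' _ _ _ _ _ D HL Y1 Y2).
  - assert (X := IH _ _ Hp f0 g0 b Gx (phi :: psi :: D) ltac:(perm_solve) ltac:(perm_solve)).
    fold h in X. rebuild (Ror' _ _ _ _ _ X).
  - psplit PG HG k0.
    + match goal with E0 : Or _ _ = plug _ _ |- _ => revert E0 end; intro E.
      destruct c; simpl in E; try discriminate; injection E as -> ->; simpl in Hp1, Hp2;
        unfold h; destruct b.
      * assert (X1 := IH _ _ Hp1 (plug c phiL) f true G D ltac:(perm_solve) ltac:(perm_solve)).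
        assert (X2 := IH _ _ Hp2 (plug c phiR) f true G D ltac:(perm_solve) ltac:(perm_solve)).
        simpl in X1, X2. rebuild (Lidis' _ _ _ _ _ _ X1 X2).
      * assert (X1 := IH _ _ Hp1 (plug c phiL) f false G D ltac:(perm_solve) ltac:(perm_solve)).
        simpl in X1. apply dv_S. prm X1 (f :: Gx) Dx.
      * assert (X1 := IH _ _ Hp1 f (plug c phiL) true G D ltac:(perm_solve) ltac:(perm_solve)).
        simpl in X1. apply dv_S. prm X1 (f :: Gx) Dx.
      * assert (X1 := IH _ _ Hp1 f (plug c phiL) false G D ltac:(perm_solve) ltac:(perm_solve)).
        assert (X2 := IH _ _ Hp2 f (plug c phiR) false G D ltac:(perm_solve) ltac:(perm_solve)).
        simpl in X1, X2. rebuild (Lidis' _ _ _ _ _ _ X1 X2).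
    + assert (X1 := IH _ _ Hp1 f0 g0 b (plug c phiL :: k0) D ltac:(perm_solve) ltac:(perm_solve)).
      assert (X2 := IH _ _ Hp2 f0 g0 b (plug c phiR :: k0) D ltac:(perm_solve) ltac:(perm_solve)).
      fold h in X1, X2.
      assert (Y1 : dv n (plug c phiL :: h :: k0) D) by prm X1 (plug c phiL :: h :: k0) D.
      assert (Y2 : dv n (plug c phiR :: h :: k0) D) by prm X2 (plug c phiR :: h :: k0) D.
      rebuild (Lidis' _ _ _ _ _ _ Y1 Y2).
  - assert (X := IH _ _ Hp f0 g0 b Gx _ ltac:(perm_solve) (Permutation_refl _)).
    fold h in X. rebuild (Ridis' _ _ _ _ _ _ _ X).
Qed.

Lemma plug_classical_false c L R f : f = plug c (Idis L R) -> classical f = true -> False.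
Proof. intros -> H. rewrite plug_nonclassical in H. discriminate. Qed.

Lemma inv_Rand : forall n G0 D0, dv n G0 D0 -> forall f0 g0 (b : bool) Gx Dx,
  classical f0 = true -> classical g0 = true ->
  Permutation G0 Gx -> Permutation D0 (And f0 g0 :: Dx) -> dv n Gx ((if b then f0 else g0) :: Dx).
Proof.
  induction n as [|n IH]; intros G0 D0 H; [inversion H|]; dvcase H; intros f0 g0 b Gx Dx Hf Hg PG PD;
  set (h := if b then f0 else g0);
  assert (Hh : classical h = true) by (unfold h; destruct b; auto).
  - destruct (ax_in _ _ _ _ _ HD PD) as [D2 HD2]; [discriminate|].
    apply d_var with p G' (h :: D2); perm_solve.
  - apply d_bot with G'; perm_solve.
  - assert (X := IH _ _ Hp f0 g0 b G (a :: Dx) Hf Hg ltac:(perm_solve) ltac:(perm_solve)).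
    fold h in X. assert (X' : dv n G (a :: h :: Dx)) by prm X G (a :: h :: Dx).
    rebuild (Lneg' _ _ _ _ Ha X').
  - psplit PD HD k0; [discriminate|].
    assert (X := IH _ _ Hp f0 g0 b (a :: G) k0 Hf Hg ltac:(perm_solve) ltac:(perm_solve)).
    fold h in X. rebuild (Rneg' _ _ _ _ Ha X).
  - assert (X := IH _ _ Hp f0 g0 b (phi :: psi :: G) Dx Hf Hg ltac:(perm_solve) ltac:(perm_solve)).
    fold h in X. rebuild (Land' _ _ _ _ _ X).
  - psplit PD HD k0.
    + match goal with E0 : And _ _ = And _ _ |- _ => injection E0 as -> -> end.
      apply dv_S. unfold h; destruct b.
      * prm (wkRl _ _ _ Hp1 D) Gx (phi :: Dx).
      * prm (wkRl _ _ _ Hp2 D) Gx (psi :: Dx).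
    + destruct (perm_app_split _ _ _ _ ltac:(eassumption)) as [[D1 [HD1 Hk]]|[L1 [HL1 Hk]]].
      * rebuild (Rand' _ _ _ _ _ (h :: D1) HL Hp1 Hp2).
      * destruct (all_classical_tail _ _ _ HL HL1) as [HL1c _].
        assert (X1 := IH _ _ Hp1 f0 g0 b G (phi :: L1) Hf Hg ltac:(perm_solve) ltac:(perm_solve)).
        assert (X2 := IH _ _ Hp2 f0 g0 b G (psi :: L1) Hf Hg ltac:(perm_solve) ltac:(perm_solve)).
        fold h in X1, X2.
        assert (Y1 : dv n G (phi :: h :: L1)) by prm X1 G (phi :: h :: L1).
        assert (Y2 : dv n G (psi :: h :: L1)) by prm X2 G (psi :: h :: L1).
        rebuild (Rand' _ _ _ _ _ D (all_classical_cons _ _ Hh HL1c) Y1 Y2).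
  - destruct (perm_app_split _ _ _ _ (Permutation_trans (Permutation_sym HD) PD)) as [[D1 [HD1 Hk]]|[L1 [HL1 Hk]]].
    + rebuild (Lor' _ _ _ _ _ (h :: D1) HL Hp1 Hp2).
    + destruct (all_classical_tail _ _ _ HL HL1) as [HL1c _].
      assert (X1 := IH _ _ Hp1 f0 g0 b (phi :: G) L1 Hf Hg ltac:(perm_solve) ltac:(perm_solve)).
      assert (X2 := IH _ _ Hp2 f0 g0 b (psi :: G) L1 Hf Hg ltac:(perm_solve) ltac:(perm_solve)).
      fold h in X1, X2.
      rebuild (Lor' _ _ _ _ _ D (all_classical_cons _ _ Hh HL1c) X1 X2).
  - psplit PD HD k0; [discriminate|].
    assert (X := IH _ _ Hp f0 g0 b G (phi :: psi :: k0) Hf Hg ltac:(perm_solve) ltac:(perm_solve)).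
    fold h in X. assert (X' : dv n G (phi :: psi :: h :: k0)) by prm X G (phi :: psi :: h :: k0).
    rebuild (Ror' _ _ _ _ _ X').
  - assert (X1 := IH _ _ Hp1 f0 g0 b (plug c phiL :: G) Dx Hf Hg ltac:(perm_solve) ltac:(perm_solve)).
    assert (X2 := IH _ _ Hp2 f0 g0 b (plug c phiR :: G) Dx Hf Hg ltac:(perm_solve) ltac:(perm_solve)).
    fold h in X1, X2. rebuild (Lidis' _ _ _ _ _ _ X1 X2).
  - psplit PD HD k0.
    + exfalso. eapply plug_classical_false; [eassumption|]. simpl. rewrite Hf, Hg. reflexivity.
    + assert (X := IH _ _ Hp f0 g0 b G (plug c (if i then phiL else phiR) :: k0) Hf Hg ltac:(perm_solve) ltac:(perm_solve)).
      fold h in X.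
      assert (X' : dv n G (plug c (if i then phiL else phiR) :: h :: k0)) by prm X G (plug c (if i then phiL else phiR) :: h :: k0).
      rebuild (Ridis' _ _ _ _ _ _ _ X').
Qed.

Lemma inv_Ror : forall n G0 D0, dv n G0 D0 -> forall f0 g0 Gx Dx,
  classical f0 = true -> classical g0 = true ->
  Permutation G0 Gx -> Permutation D0 (Or f0 g0 :: Dx) -> dv n Gx (f0 :: g0 :: Dx).
Proof.
  induction n as [|n IH]; intros G0 D0 H; [inversion H|]; dvcase H; intros f0 g0 Gx Dx Hf Hg PG PD.
  - destruct (ax_in _ _ _ _ _ HD PD) as [D2 HD2]; [discriminate|].
    apply d_var with p G' (f0 :: g0 :: D2); perm_solve.
  - apply d_bot with G'; perm_solve.
  - assert (X := IH _ _ Hp f0 g0 G (a :: Dx) Hf Hg ltac:(perm_solve) ltac:(perm_solve)).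
    assert (X' : dv n G (a :: f0 :: g0 :: Dx)) by prm X G (a :: f0 :: g0 :: Dx).
    rebuild (Lneg' _ _ _ _ Ha X').
  - psplit PD HD k0; [discriminate|].
    assert (X := IH _ _ Hp f0 g0 (a :: G) k0 Hf Hg ltac:(perm_solve) ltac:(perm_solve)).
    rebuild (Rneg' _ _ _ _ Ha X).
  - assert (X := IH _ _ Hp f0 g0 (phi :: psi :: G) Dx Hf Hg ltac:(perm_solve) ltac:(perm_solve)).
    rebuild (Land' _ _ _ _ _ X).
  - psplit PD HD k0; [discriminate|].
    destruct (perm_app_split _ _ _ _ ltac:(eassumption)) as [[D1 [HD1 Hk]]|[L1 [HL1 Hk]]].
    + rebuild (Rand' _ _ _ _ _ (f0 :: g0 :: D1) HL Hp1 Hp2).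
    + destruct (all_classical_tail _ _ _ HL HL1) as [HL1c _].
      assert (X1 := IH _ _ Hp1 f0 g0 G (phi :: L1) Hf Hg ltac:(perm_solve) ltac:(perm_solve)).
      assert (X2 := IH _ _ Hp2 f0 g0 G (psi :: L1) Hf Hg ltac:(perm_solve) ltac:(perm_solve)).
      assert (Y1 : dv n G (phi :: f0 :: g0 :: L1)) by prm X1 G (phi :: f0 :: g0 :: L1).
      assert (Y2 : dv n G (psi :: f0 :: g0 :: L1)) by prm X2 G (psi :: f0 :: g0 :: L1).
      rebuild (Rand' _ _ _ _ _ D (all_classical_cons _ _ Hf (all_classical_cons _ _ Hg HL1c)) Y1 Y2).
  - destruct (perm_app_split _ _ _ _ (Permutation_trans (Permutation_sym HD) PD)) as [[D1 [HD1 Hk]]|[L1 [HL1 Hk]]].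
    + rebuild (Lor' _ _ _ _ _ (f0 :: g0 :: D1) HL Hp1 Hp2).
    + destruct (all_classical_tail _ _ _ HL HL1) as [HL1c _].
      assert (X1 := IH _ _ Hp1 f0 g0 (phi :: G) L1 Hf Hg ltac:(perm_solve) ltac:(perm_solve)).
      assert (X2 := IH _ _ Hp2 f0 g0 (psi :: G) L1 Hf Hg ltac:(perm_solve) ltac:(perm_solve)).
      rebuild (Lor' _ _ _ _ _ D (all_classical_cons _ _ Hf (all_classical_cons _ _ Hg HL1c)) X1 X2).
  - psplit PD HD k0.
    + match goal with E0 : Or _ _ = Or _ _ |- _ => injection E0 as -> -> end.
      apply dv_S. prm Hp Gx (phi :: psi :: Dx).
    + assert (X := IH _ _ Hp f0 g0 G (phi :: psi :: k0) Hf Hg ltac:(perm_solve) ltac:(perm_solve)).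
      assert (X' : dv n G (phi :: psi :: f0 :: g0 :: k0)) by prm X G (phi :: psi :: f0 :: g0 :: k0).
      rebuild (Ror' _ _ _ _ _ X').
  - assert (X1 := IH _ _ Hp1 f0 g0 (plug c phiL :: G) Dx Hf Hg ltac:(perm_solve) ltac:(perm_solve)).
    assert (X2 := IH _ _ Hp2 f0 g0 (plug c phiR :: G) Dx Hf Hg ltac:(perm_solve) ltac:(perm_solve)).
    rebuild (Lidis' _ _ _ _ _ _ X1 X2).
  - psplit PD HD k0.
    + exfalso. eapply plug_classical_false; [eassumption|]. simpl. rewrite Hf, Hg. reflexivity.
    + assert (X := IH _ _ Hp f0 g0 G (plug c (if i then phiL else phiR) :: k0) Hf Hg ltac:(perm_solve) ltac:(perm_solve)).
      assert (X' : dv n G (plug c (if i then phiL else phiR) :: f0 :: g0 :: k0)) by prm X G (plug c (if i then phiL else phiR) :: f0 :: g0 :: k0).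
      rebuild (Ridis' _ _ _ _ _ _ _ X').
Qed.

Inductive sub : formula -> formula -> Prop :=
| s_var p : sub (Var p) (Var p)
| s_bot : sub Bot Bot
| s_neg a : sub (Neg a) (Neg a)
| s_and a b a' b' : sub a a' -> sub b b' -> sub (And a b) (And a' b')
| s_or a b a' b' : sub a a' -> sub b b' -> sub (Or a b) (Or a' b')
| s_idis a b a' b' : sub a a' -> sub b b' -> sub (Idis a b) (Idis a' b')
| s_idisL a b a' : sub a a' -> sub (Idis a b) a'
| s_idisR a b b' : sub b b' -> sub (Idis a b) b'.

Lemma sub_refl f : sub f f.
Proof. induction f; constructor; auto. Qed.

Lemma sub_plugL c L R : sub (plug c (Idis L R)) (plug c L).
Proof. induction c; simpl; [apply s_idisL, sub_refl|..]; constructor; auto using sub_refl. Qed.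

Lemma plug_sub c L R g : sub (plug c (Idis L R)) g ->
  sub (plug c L) g \/ sub (plug c R) g \/
  exists c' L' R', g = plug c' (Idis L' R') /\ sub (plug c L) (plug c' L') /\ sub (plug c R) (plug c' R').
Proof.
  revert g; induction c; simpl; intros g H.
  - inversion H; subst; auto.
    right; right. exists Hole, a', b'. simpl; auto.
  - inversion H; subst. destruct (IHc _ H2) as [H5|[H5|[c' [L' [R' [E [H6 H7]]]]]]].
    + left; constructor; auto.
    + right; left; constructor; auto.
    + subst. right; right. exists (CAndL c' b'), L', R'. simpl; split; auto; split; constructor; auto.
  - inversion H; subst. destruct (IHc _ H4) as [H5|[H5|[c' [L' [R' [E [H6 H7]]]]]]].
    + left; constructor; auto.
    + right; left; constructor; auto.
    + subst. right; right. exists (CAndR a' c'), L', R'. simpl; split; auto; split; constructor; auto.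
  - inversion H; subst. destruct (IHc _ H2) as [H5|[H5|[c' [L' [R' [E [H6 H7]]]]]]].
    + left; constructor; auto.
    + right; left; constructor; auto.
    + subst. right; right. exists (COrL c' b'), L', R'. simpl; split; auto; split; constructor; auto.
  - inversion H; subst. destruct (IHc _ H4) as [H5|[H5|[c' [L' [R' [E [H6 H7]]]]]]].
    + left; constructor; auto.
    + right; left; constructor; auto.
    + subst. right; right. exists (COrR a' c'), L', R'. simpl; split; auto; split; constructor; auto.
  - inversion H; subst.
    + destruct (IHc _ H2) as [H5|[H5|[c' [L' [R' [E [H6 H7]]]]]]].
      * left; constructor; auto.
      * right; left; constructor; auto.
      * subst. right; right. exists (CIdisL c' b'), L', R'. simpl; split; auto; split; constructor; auto.
    + destruct (IHc _ H3) as [H5|[H5|[c' [L' [R' [E [H6 H7]]]]]]].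
      * left; apply s_idisL; auto.
      * right; left; apply s_idisL; auto.
      * subst. right; right. exists c', L', R'. split; auto; split; apply s_idisL; auto.
    + left; apply s_idisR; auto.
  - inversion H; subst.
    + destruct (IHc _ H4) as [H5|[H5|[c' [L' [R' [E [H6 H7]]]]]]].
      * left; constructor; auto.
      * right; left; constructor; auto.
      * subst. right; right. exists (CIdisR a' c'), L', R'. simpl; split; auto; split; constructor; auto.
    + left; apply s_idisL; auto.
    + destruct (IHc _ H3) as [H5|[H5|[c' [L' [R' [E [H6 H7]]]]]]].
      * left; apply s_idisR; auto.
      * right; left; apply s_idisR; auto.
      * subst. right; right. exists c', L', R'. split; auto; split; apply s_idisR; auto.
Qed.

Lemma inv_sub : forall n G0 D0, dv n G0 D0 -> forall f g Gx Dx, sub f g ->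
  Permutation G0 (f :: Gx) -> Permutation D0 Dx -> dv n (g :: Gx) Dx.
Proof.
  induction n as [|n IH]; intros G0 D0 H; [inversion H|]; dvcase H; intros f g Gx Dx Hs PG PD.
  - psplit PG HG k0.
    + subst f. inversion Hs; subst. apply d_var with p Gx D'; perm_solve.
    + apply d_var with p (g :: k0) D'; perm_solve.
  - psplit PG HG k0.
    + subst f. inversion Hs; subst. apply d_bot with Gx; perm_solve.
    + apply d_bot with (g :: k0); perm_solve.
  - psplit PG HG k0.
    + subst f. inversion Hs; subst. rebuild (Lneg' _ _ _ _ Ha Hp).
    + assert (X := IH _ _ Hp f g k0 (a :: D) Hs ltac:(perm_solve) ltac:(perm_solve)).
      rebuild (Lneg' _ _ _ _ Ha X).
  - assert (X := IH _ _ Hp f g (a :: Gx) D Hs ltac:(perm_solve) ltac:(perm_solve)).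
    assert (X' : dv n (a :: g :: Gx) D) by prm X (a :: g :: Gx) D.
    rebuild (Rneg' _ _ _ _ Ha X').
  - psplit PG HG k0.
    + subst f. inversion Hs; subst.
      assert (X := IH _ _ Hp phi a' (psi :: G) D ltac:(assumption) ltac:(perm_solve) ltac:(perm_solve)).
      assert (X2 := IH _ _ X psi b' (a' :: G) D ltac:(assumption) ltac:(perm_solve) ltac:(perm_solve)).
      assert (X' : dv n (a' :: b' :: G) D) by prm X2 (a' :: b' :: G) D.
      rebuild (Land' _ _ _ _ _ X').
    + assert (X := IH _ _ Hp f g (phi :: psi :: k0) D Hs ltac:(perm_solve) ltac:(perm_solve)).
      assert (X' : dv n (phi :: psi :: g :: k0) D) by prm X (phi :: psi :: g :: k0) D.
      rebuild (Land' _ _ _ _ _ X').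
  - assert (X1 := IH _ _ Hp1 f g Gx (phi :: L) Hs ltac:(perm_solve) ltac:(perm_solve)).
    assert (X2 := IH _ _ Hp2 f g Gx (psi :: L) Hs ltac:(perm_solve) ltac:(perm_solve)).
    rebuild (Rand' _ _ _ _ _ D HL X1 X2).
  - psplit PG HG k0.
    + subst f. inversion Hs; subst.
      assert (X1 := IH _ _ Hp1 phi a' G L ltac:(assumption) ltac:(perm_solve) ltac:(perm_solve)).
      assert (X2 := IH _ _ Hp2 psi b' G L ltac:(assumption) ltac:(perm_solve) ltac:(perm_solve)).
      rebuild (Lor' _ _ _ _ _ D HL X1 X2).
    + assert (X1 := IH _ _ Hp1 f g (phi :: k0) L Hs ltac:(perm_solve) ltac:(perm_solve)).
      assert (X2 := IH _ _ Hp2 f g (psi :: k0) L Hs ltac:(perm_solve) ltac:(perm_solve)).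
      assert (Y1 : dv n (phi :: g :: k0) L) by prm X1 (phi :: g :: k0) L.
      assert (Y2 : dv n (psi :: g :: k0) L) by prm X2 (psi :: g :: k0) L.
      rebuild (Lor' _ _ _ _ _ D HL Y1 Y2).
  - assert (X := IH _ _ Hp f g Gx (phi :: psi :: D) Hs ltac:(perm_solve) ltac:(perm_solve)).
    rebuild (Ror' _ _ _ _ _ X).
  - psplit PG HG k0.
    + subst f. destruct (plug_sub _ _ _ _ Hs) as [H5|[H5|[c' [L' [R' [E [H6 H7]]]]]]].
      * apply dv_S. exact (IH _ _ Hp1 _ _ Gx Dx H5 ltac:(perm_solve) ltac:(perm_solve)).
      * apply dv_S. exact (IH _ _ Hp2 _ _ Gx Dx H5 ltac:(perm_solve) ltac:(perm_solve)).
      * subst g.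
        assert (X1 := IH _ _ Hp1 _ _ Gx Dx H6 ltac:(perm_solve) ltac:(perm_solve)).
        assert (X2 := IH _ _ Hp2 _ _ Gx Dx H7 ltac:(perm_solve) ltac:(perm_solve)).
        exact (Lidis' _ _ _ _ _ _ X1 X2).
    + assert (X1 := IH _ _ Hp1 f g (plug c phiL :: k0) D Hs ltac:(perm_solve) ltac:(perm_solve)).
      assert (X2 := IH _ _ Hp2 f g (plug c phiR :: k0) D Hs ltac:(perm_solve) ltac:(perm_solve)).
      assert (Y1 : dv n (plug c phiL :: g :: k0) D) by prm X1 (plug c phiL :: g :: k0) D.
      assert (Y2 : dv n (plug c phiR :: g :: k0) D) by prm X2 (plug c phiR :: g :: k0) D.
      rebuild (Lidis' _ _ _ _ _ _ Y1 Y2).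
  - assert (X := IH _ _ Hp f g Gx _ Hs ltac:(perm_solve) (Permutation_refl _)).
    rebuild (Ridis' _ _ _ _ _ _ _ X).
Qed.

Lemma sub_plugR c L R : sub (plug c (Idis L R)) (plug c R).
Proof. induction c; simpl; [apply s_idisR, sub_refl|..]; constructor; auto using sub_refl. Qed.

Lemma perm_split2 (v P : formula) Gx G1 : Permutation (v :: v :: Gx) (P :: G1) ->
  (v = P /\ Permutation G1 (v :: Gx)) \/ (exists k, Permutation G1 (v :: v :: k) /\ Permutation Gx (P :: k)).
Proof.
  intro H. destruct (perm_split _ _ _ _ H) as [[E Hp]|[k [Hk1 Hk2]]].
  - left; split; auto. apply Permutation_sym; auto.
  - destruct (perm_split _ _ _ _ Hk2) as [[E Hp]|[k' [Hk1' Hk2']]].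
    + left; split; auto. perm_solve.
    + right; exists k'; split; perm_solve.
Qed.

Lemma perm_app_split2 (a : formula) L D Dx : Permutation (L ++ D) (a :: a :: Dx) ->
  (exists D1, Permutation D (a :: D1) /\ Permutation (a :: Dx) (L ++ D1)) \/
  (exists L1, Permutation L (a :: a :: L1) /\ Permutation Dx (L1 ++ D)).
Proof.
  intro H. destruct (perm_app_split _ _ _ _ H) as [[D1 [HD1 Hk]]|[L1 [HL1 Hk]]].
  - left; exists D1; split; auto.
  - destruct (perm_app_split _ _ _ _ (Permutation_sym Hk)) as [[D1 [HD2 Hk2]]|[L2 [HL2 Hk2]]].
    + left; exists D1; split; auto. perm_solve.
    + right; exists L2; split; perm_solve.
Qed.

Lemma classical_and a b : classical (And a b) = true -> classical a = true /\ classical b = true.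
Proof. simpl; apply andb_prop. Qed.
Lemma classical_or a b : classical (Or a b) = true -> classical a = true /\ classical b = true.
Proof. simpl; apply andb_prop. Qed.

Lemma contr : forall n,
  (forall G0 D0, dv n G0 D0 -> forall v Gx Dx, Permutation G0 (v :: v :: Gx) -> Permutation D0 Dx -> dv n (v :: Gx) Dx) /\
  (forall G0 D0, dv n G0 D0 -> forall al Gx Dx, classical al = true -> Permutation G0 Gx -> Permutation D0 (al :: al :: Dx) -> dv n Gx (al :: Dx)).
Proof.
  induction n as [|n [IHL IHR]]; (split; [intros G0 D0 H | intros G0 D0 H]); try (inversion H; fail).
  -
    dvcase H; intros v Gx Dx PG PD.
    + destruct (perm_split2 _ _ _ _ (Permutation_trans (Permutation_sym PG) HG)) as [[E Hp]|[k0 [Hk1 Hk2]]].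
      * subst v. apply d_var with p Gx D'; perm_solve.
      * apply d_var with p (v :: k0) D'; perm_solve.
    + destruct (perm_split2 _ _ _ _ (Permutation_trans (Permutation_sym PG) HG)) as [[E Hp']|[k0 [Hk1 Hk2]]].
      * subst v. apply d_bot with Gx; perm_solve.
      * apply d_bot with (v :: k0); perm_solve.
    + destruct (perm_split2 _ _ _ _ (Permutation_trans (Permutation_sym PG) HG)) as [[E Hp']|[k0 [Hk1 Hk2]]].
      * subst v. assert (X := inv_Lneg _ _ _ Hp a Gx (a :: D) Ha Hp' (Permutation_refl _)).
        assert (X2 := IHR _ _ X a Gx D Ha (Permutation_refl _) (Permutation_refl _)).
        rebuild (Lneg' _ _ _ _ Ha X2).
      * assert (X := IHL _ _ Hp v k0 (a :: D) Hk1 (Permutation_refl _)).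
        rebuild (Lneg' _ _ _ _ Ha X).
    + assert (X := IHL _ _ Hp v (a :: Gx) D ltac:(perm_solve) (Permutation_refl _)).
      assert (X' : dv n (a :: v :: Gx) D) by prm X (a :: v :: Gx) D.
      rebuild (Rneg' _ _ _ _ Ha X').
    + destruct (perm_split2 _ _ _ _ (Permutation_trans (Permutation_sym PG) HG)) as [[E Hp']|[k0 [Hk1 Hk2]]].
      * subst v. assert (X := inv_Land _ _ _ Hp phi psi (phi :: psi :: Gx) D ltac:(perm_solve) (Permutation_refl _)).
        assert (X2 := IHL _ _ X phi (psi :: psi :: Gx) D ltac:(perm_solve) (Permutation_refl _)).
        assert (X3 := IHL _ _ X2 psi (phi :: Gx) D ltac:(perm_solve) (Permutation_refl _)).
        assert (X4 : dv n (phi :: psi :: Gx) D) by prm X3 (phi :: psi :: Gx) D.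
        rebuild (Land' _ _ _ _ _ X4).
      * assert (X := IHL _ _ Hp v (phi :: psi :: k0) D ltac:(perm_solve) (Permutation_refl _)).
        assert (X' : dv n (phi :: psi :: v :: k0) D) by prm X (phi :: psi :: v :: k0) D.
        rebuild (Land' _ _ _ _ _ X').
    + assert (X1 := IHL _ _ Hp1 v Gx (phi :: L) ltac:(perm_solve) (Permutation_refl _)).
      assert (X2 := IHL _ _ Hp2 v Gx (psi :: L) ltac:(perm_solve) (Permutation_refl _)).
      rebuild (Rand' _ _ _ _ _ D HL X1 X2).
    + destruct (perm_split2 _ _ _ _ (Permutation_trans (Permutation_sym PG) HG)) as [[E Hp']|[k0 [Hk1 Hk2]]].
      * subst v.
        assert (X1 := inv_Lor _ _ _ Hp1 phi psi true (phi :: Gx) L ltac:(perm_solve) (Permutation_refl _)).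
        assert (X2 := inv_Lor _ _ _ Hp2 phi psi false (psi :: Gx) L ltac:(perm_solve) (Permutation_refl _)).
        simpl in X1, X2.
        assert (Y1 := IHL _ _ X1 phi Gx L (Permutation_refl _) (Permutation_refl _)).
        assert (Y2 := IHL _ _ X2 psi Gx L (Permutation_refl _) (Permutation_refl _)).
        rebuild (Lor' _ _ _ _ _ D HL Y1 Y2).
      * assert (X1 := IHL _ _ Hp1 v (phi :: k0) L ltac:(perm_solve) (Permutation_refl _)).
        assert (X2 := IHL _ _ Hp2 v (psi :: k0) L ltac:(perm_solve) (Permutation_refl _)).
        assert (Y1 : dv n (phi :: v :: k0) L) by prm X1 (phi :: v :: k0) L.
        assert (Y2 : dv n (psi :: v :: k0) L) by prm X2 (psi :: v :: k0) L.
        rebuild (Lor' _ _ _ _ _ D HL Y1 Y2).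
    + assert (X := IHL _ _ Hp v Gx (phi :: psi :: D) ltac:(perm_solve) (Permutation_refl _)).
      rebuild (Ror' _ _ _ _ _ X).
    + destruct (perm_split2 _ _ _ _ (Permutation_trans (Permutation_sym PG) HG)) as [[E Hp']|[k0 [Hk1 Hk2]]].
      * subst v.
        assert (X1 := inv_sub _ _ _ Hp1 _ _ (plug c phiL :: Gx) D (sub_plugL c phiL phiR) ltac:(perm_solve) (Permutation_refl _)).
        assert (X2 := inv_sub _ _ _ Hp2 _ _ (plug c phiR :: Gx) D (sub_plugR c phiL phiR) ltac:(perm_solve) (Permutation_refl _)).
        assert (Y1 := IHL _ _ X1 _ Gx D (Permutation_refl _) (Permutation_refl _)).
        assert (Y2 := IHL _ _ X2 _ Gx D (Permutation_refl _) (Permutation_refl _)).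
        rebuild (Lidis' _ _ _ _ _ _ Y1 Y2).
      * assert (X1 := IHL _ _ Hp1 v (plug c phiL :: k0) D ltac:(perm_solve) (Permutation_refl _)).
        assert (X2 := IHL _ _ Hp2 v (plug c phiR :: k0) D ltac:(perm_solve) (Permutation_refl _)).
        assert (Y1 : dv n (plug c phiL :: v :: k0) D) by prm X1 (plug c phiL :: v :: k0) D.
        assert (Y2 : dv n (plug c phiR :: v :: k0) D) by prm X2 (plug c phiR :: v :: k0) D.
        rebuild (Lidis' _ _ _ _ _ _ Y1 Y2).
    + assert (X := IHL _ _ Hp v Gx _ ltac:(perm_solve) (Permutation_refl _)).
      rebuild (Ridis' _ _ _ _ _ _ _ X).
  -
    dvcase H; intros al Gx Dx Hal PG PD.
    + destruct (perm_split2 _ _ _ _ (Permutation_trans (Permutation_sym PD) HD)) as [[E Hp]|[k0 [Hk1 Hk2]]].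
      * subst al. apply d_var with p G' Dx; perm_solve.
      * apply d_var with p G' (al :: k0); perm_solve.
    + apply d_bot with G'; perm_solve.
    + assert (X := IHR _ _ Hp al G (a :: Dx) Hal (Permutation_refl _) ltac:(perm_solve)).
      assert (X' : dv n G (a :: al :: Dx)) by prm X G (a :: al :: Dx).
      rebuild (Lneg' _ _ _ _ Ha X').
    + destruct (perm_split2 _ _ _ _ (Permutation_trans (Permutation_sym PD) HD)) as [[E Hp']|[k0 [Hk1 Hk2]]].
      * subst al. assert (X := inv_Rneg _ _ _ Hp a (a :: G) Dx (Permutation_refl _) Hp').
        assert (X2 := IHL _ _ X a G Dx (Permutation_refl _) (Permutation_refl _)).
        rebuild (Rneg' _ _ _ _ Ha X2).
      * assert (X := IHR _ _ Hp al (a :: G) k0 Hal (Permutation_refl _) Hk1).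
        rebuild (Rneg' _ _ _ _ Ha X).
    + assert (X := IHR _ _ Hp al (phi :: psi :: G) Dx Hal (Permutation_refl _) ltac:(perm_solve)).
      rebuild (Land' _ _ _ _ _ X).
    + destruct (perm_split2 _ _ _ _ (Permutation_trans (Permutation_sym PD) HD)) as [[E Hp']|[k0 [Hk1 Hk2]]].
      * subst al. destruct (classical_and _ _ Hal) as [Hphi Hpsi].
        destruct (perm_app_split _ _ _ _ Hp') as [[D1 [HD1 Hk]]|[L1 [HL1 Hk]]].
        -- rebuild (Rand' _ _ _ _ _ D1 HL Hp1 Hp2).
        -- destruct (all_classical_tail _ _ _ HL HL1) as [HL1c _].
           assert (X1 := inv_Rand _ _ _ Hp1 phi psi true G (phi :: L1) Hphi Hpsi (Permutation_refl _) ltac:(perm_solve)).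
           assert (X2 := inv_Rand _ _ _ Hp2 phi psi false G (psi :: L1) Hphi Hpsi (Permutation_refl _) ltac:(perm_solve)).
           simpl in X1, X2.
           assert (Y1 := IHR _ _ X1 phi G L1 Hphi (Permutation_refl _) (Permutation_refl _)).
           assert (Y2 := IHR _ _ X2 psi G L1 Hpsi (Permutation_refl _) (Permutation_refl _)).
           rebuild (Rand' _ _ _ _ _ D HL1c Y1 Y2).
      * destruct (perm_app_split2 _ _ _ _ Hk1) as [[D1 [HD1 Hk]]|[L1 [HL1 Hk]]].
        -- rebuild (Rand' _ _ _ _ _ D1 HL Hp1 Hp2).
        -- destruct (all_classical_tail _ _ _ HL HL1) as [HL1c _].
           assert (X1 := IHR _ _ Hp1 al G (phi :: L1) Hal (Permutation_refl _) ltac:(perm_solve)).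
           assert (X2 := IHR _ _ Hp2 al G (psi :: L1) Hal (Permutation_refl _) ltac:(perm_solve)).
           assert (Y1 : dv n G (phi :: al :: L1)) by prm X1 G (phi :: al :: L1).
           assert (Y2 : dv n G (psi :: al :: L1)) by prm X2 G (psi :: al :: L1).
           rebuild (Rand' _ _ _ _ _ D HL1c Y1 Y2).
    + destruct (perm_app_split2 _ _ _ _ (Permutation_trans (Permutation_sym HD) PD)) as [[D1 [HD1 Hk]]|[L1 [HL1 Hk]]].
      * rebuild (Lor' _ _ _ _ _ D1 HL Hp1 Hp2).
      * destruct (all_classical_tail _ _ _ HL HL1) as [HL1c _].
        assert (X1 := IHR _ _ Hp1 al (phi :: G) L1 Hal (Permutation_refl _) HL1).
        assert (X2 := IHR _ _ Hp2 al (psi :: G) L1 Hal (Permutation_refl _) HL1).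
        rebuild (Lor' _ _ _ _ _ D HL1c X1 X2).
    + destruct (perm_split2 _ _ _ _ (Permutation_trans (Permutation_sym PD) HD)) as [[E Hp']|[k0 [Hk1 Hk2]]].
      * subst al. destruct (classical_or _ _ Hal) as [Hphi Hpsi].
        assert (X := inv_Ror _ _ _ Hp phi psi G (phi :: psi :: Dx) Hphi Hpsi (Permutation_refl _) ltac:(perm_solve)).
        assert (X2 := IHR _ _ X phi G (psi :: psi :: Dx) Hphi (Permutation_refl _) ltac:(perm_solve)).
        assert (X3 := IHR _ _ X2 psi G (phi :: Dx) Hpsi (Permutation_refl _) ltac:(perm_solve)).
        assert (X4 : dv n G (phi :: psi :: Dx)) by prm X3 G (phi :: psi :: Dx).
        rebuild (Ror' _ _ _ _ _ X4).
      * assert (X := IHR _ _ Hp al G (phi :: psi :: k0) Hal (Permutation_refl _) ltac:(perm_solve)).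
        assert (X' : dv n G (phi :: psi :: al :: k0)) by prm X G (phi :: psi :: al :: k0).
        rebuild (Ror' _ _ _ _ _ X').
    + assert (X1 := IHR _ _ Hp1 al (plug c phiL :: G) Dx Hal (Permutation_refl _) ltac:(perm_solve)).
      assert (X2 := IHR _ _ Hp2 al (plug c phiR :: G) Dx Hal (Permutation_refl _) ltac:(perm_solve)).
      rebuild (Lidis' _ _ _ _ _ _ X1 X2).
    + destruct (perm_split2 _ _ _ _ (Permutation_trans (Permutation_sym PD) HD)) as [[E Hp']|[k0 [Hk1 Hk2]]].
      * exfalso. eapply plug_classical_false; eassumption.
      * assert (X := IHR _ _ Hp al G (plug c (if i then phiL else phiR) :: k0) Hal (Permutation_refl _) ltac:(perm_solve)).
        assert (X' : dv n G (plug c (if i then phiL else phiR) :: al :: k0)) by prm X G (plug c (if i then phiL else phiR) :: al :: k0).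
        rebuild (Ridis' _ _ _ _ _ _ _ X').
Qed.

Theorem lemma4p3 :
  forall (n : nat), 1 <= n ->
  forall (G D : list formula) (nu alpha : formula),
    Forall (fun f => wf f = true) G ->
    Forall (fun f => wf f = true) D ->
    wf nu = true ->
    classical alpha = true ->
    (vdash n (nu :: nu :: G) D -> vdash n (nu :: G) D) /\
    (vdash n G (alpha :: alpha :: D) -> vdash n G (alpha :: D)).
Proof.
  intros n _ G D nu alpha _ _ _ Ha. destruct (contr n) as [CL CR]. split; intro H.
  - apply dv_vdash. exact (CL _ _ (vdash_dv _ _ _ H) nu G D (Permutation_refl _) (Permutation_refl _)).
  - apply dv_vdash. exact (CR _ _ (vdash_dv _ _ _ H) alpha G D Ha (Permutation_refl _) (Permutation_refl _)).
Qed.
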